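(* If $n\ge2$ is even, there are a locally finite specular $n$-distributive variety and a locally finite specular $n$-alvin variety, neither of which is $(n-1)$-distributive. If $n\ge2$, there is a locally finite specular $n$-directed-distributive variety which is not $(n-1)$-directed-distributive.
   Context: Ternary terms $t_0,\dots,t_n$ with $t_0(x,y,z)=x$, $t_n(x,y,z)=z$, $t_h(x,y,x)=x$ for all $h$ are J\'onsson terms if $t_h(x,x,z)=t_{h+1}(x,x,z)$ for even $h$ and $t_h(x,z,z)=t_{h+1}(x,z,z)$ for odd $h$ ($0\le h<n$); alvin terms if even/odd are exchanged; directed J\'onsson terms if $t_h(x,z,z)=t_{h+1}(x,x,z)$ for all $0\le h<n$. A variety is specular $n$-distributive (specular $n$-alvin, specular $n$-directed-distributive) if it has J\'onsson (alvin, directed J\'onsson) terms $t_0,\dots,t_n$ that also satisfy $t_i(x,y,z)=t_{n-i}(z,y,x)$ for all $0\le i\le n$. $n$-distributive and $n$-directed-distributive are defined likewise without the specularity equations. *)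

(* Defs.v *)
From mathcomp Require Import all_boot.
Set Implicit Arguments. Unset Strict Implicit. Unset Printing Implicit Defensive.

Inductive term (F : Type) (ar : F -> nat) (X : Type) : Type :=
| Var of X
| App (f : F) of ('I_(ar f) -> term ar X).

Fixpoint eval (F : Type) (ar : F -> nat) (X A : Type)
  (ops : forall f : F, ('I_(ar f) -> A) -> A) (v : X -> A) (t : term ar X) : A :=
  match t with
  | Var x => v x
  | App f ts => ops f (fun i => eval ops v (ts i))
  end.

Record variety := Variety {
  sym : Type;
  arity : sym -> nat;
  axioms : term arity nat -> term arity nat -> Prop }.
Arguments sym : clear implicits.
Arguments arity : clear implicits.
Arguments axioms : clear implicits.

Definition ops_of (V : variety) (A : Type) := forall f : sym V, ('I_(@arity V f) -> A) -> A.

Definition models (V : variety) (A : Type) (ops : ops_of V A) : Prop :=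
  forall s t, axioms V s t -> forall v : nat -> A, eval ops v s = eval ops v t.

(* Locally finite: every finitely generated algebra of V is finite,
   i.e. the subalgebra generated by n elements (the set of values of n-ary
   terms at the generators) is finite. *)
Definition locally_finite (V : variety) : Prop :=
  forall (A : Type) (ops : ops_of V A), models ops ->
  forall (n : nat) (g : 'I_n -> A),
  exists (m : nat) (e : 'I_m -> A),
    forall t : term (@arity V) 'I_n, exists i, eval ops g t = e i.

(* ternary terms: variables x, y, z are 0, 1, 2 *)
Definition tterm (V : variety) := term (@arity V) 'I_3.

Definition ev3 (V : variety) (A : Type) (ops : ops_of V A) (t : tterm V) (x y z : A) : A :=
  eval ops (fun i : 'I_3 => nth x [:: x; y; z] i) t.

Definition sat3 (V : variety)
  (P : forall A : Type, ops_of V A -> A -> A -> A -> Prop) : Prop :=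
  forall (A : Type) (ops : ops_of V A), models ops -> forall x y z : A, P A ops x y z.

Definition base_terms (V : variety) (n : nat) (t : nat -> tterm V) : Prop :=
  sat3 (fun A ops x y z =>
    [/\ ev3 ops (t 0) x y z = x, ev3 ops (t n) x y z = z &
        forall h, h <= n -> ev3 ops (t h) x y x = x]).

Definition jonsson_terms (V : variety) (n : nat) (alvin : bool) (t : nat -> tterm V) : Prop :=
  base_terms n t /\
  sat3 (fun A ops x y z => forall h, h < n ->
    if odd h (+) alvin
    then ev3 ops (t h) x z z = ev3 ops (t h.+1) x z z
    else ev3 ops (t h) x x z = ev3 ops (t h.+1) x x z).

Definition directed_jonsson_terms (V : variety) (n : nat) (t : nat -> tterm V) : Prop :=
  base_terms n t /\
  sat3 (fun A ops x y z => forall h, h < n ->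
    ev3 ops (t h) x z z = ev3 ops (t h.+1) x x z).

Definition specular (V : variety) (n : nat) (t : nat -> tterm V) : Prop :=
  sat3 (fun A ops x y z => forall i, i <= n ->
    ev3 ops (t i) x y z = ev3 ops (t (n - i)) z y x).

Definition n_distributive (V : variety) (n : nat) : Prop :=
  exists t : nat -> tterm V, jonsson_terms n false t.
Definition specular_n_distributive (V : variety) (n : nat) : Prop :=
  exists t : nat -> tterm V, jonsson_terms n false t /\ specular n t.
Definition specular_n_alvin (V : variety) (n : nat) : Prop :=
  exists t : nat -> tterm V, jonsson_terms n true t /\ specular n t.
Definition n_directed_distributive (V : variety) (n : nat) : Prop :=
  exists t : nat -> tterm V, directed_jonsson_terms n t.
Definition specular_n_directed_distributive (V : variety) (n : nat) : Prop :=
  exists t : nat -> tterm V, directed_jonsson_terms n t /\ specular n t.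

(* Main.v *)
Require Import Defs.
From mathcomp Require Import all_boot zify.
From Stdlib Require Import ClassicalEpsilon FunctionalExtensionality.
Set Implicit Arguments. Unset Strict Implicit. Unset Printing Implicit Defensive.

Fixpoint rename (F : Type) (ar : F -> nat) (X Y : Type) (f : X -> Y) (t : term ar X) : term ar Y :=
  match t with
  | Var x => Var ar (f x)
  | App g ts => App (fun i => rename f (ts i))
  end.

Lemma eval_ext (F : Type) (ar : F -> nat) (X A : Type) (o : forall f : F, ('I_(ar f) -> A) -> A)
  (v w : X -> A) (t : term ar X) : (forall x, v x = w x) -> eval o v t = eval o w t.
Proof.
move=> H; elim: t => [x|g ts IH] /=; first exact: H.
by congr (o g _); apply: functional_extensionality => i; exact: IH.
Qed.

Lemma eval_rename (F : Type) (ar : F -> nat) (X Y A : Type) (o : forall f : F, ('I_(ar f) -> A) -> A)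
  (f : X -> Y) (v : Y -> A) (t : term ar X) : eval o v (rename f t) = eval o (fun x => v (f x)) t.
Proof.
elim: t => [x|g ts IH] //=.
by congr (o g _); apply: functional_extensionality => i; exact: IH.
Qed.

Definition genV (F : Type) (ar : F -> nat) (A0 : Type) (o : forall f : F, ('I_(ar f) -> A0) -> A0) : variety :=
  @Variety F ar (fun s t => forall v : nat -> A0, eval o v s = eval o v t).

Lemma models_gen (F : Type) (ar : F -> nat) (A0 : Type) (o : forall f : F, ('I_(ar f) -> A0) -> A0) :
  @models (genV o) A0 o.
Proof. by move=> s t H v; apply: H. Qed.

Definition sel (A : Type) (x y z : A) (i : nat) := nth x [:: x; y; z] i.

Lemma transfer (F : Type) (ar : F -> nat) (A0 : Type) (o : forall f : F, ('I_(ar f) -> A0) -> A0)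
  (s s' : term ar 'I_3) (i1 i2 i3 j1 j2 j3 : nat) :
  i1 < 3 -> i2 < 3 -> i3 < 3 -> j1 < 3 -> j2 < 3 -> j3 < 3 ->
  (forall x y z : A0, @ev3 (genV o) A0 o s (sel x y z i1) (sel x y z i2) (sel x y z i3) =
                      @ev3 (genV o) A0 o s' (sel x y z j1) (sel x y z j2) (sel x y z j3)) ->
  forall (A : Type) (ops : ops_of (genV o) A), models ops -> forall x y z : A,
    @ev3 (genV o) A ops s (sel x y z i1) (sel x y z i2) (sel x y z i3) =
    @ev3 (genV o) A ops s' (sel x y z j1) (sel x y z j2) (sel x y z j3).
Proof.
move=> Hi1 Hi2 Hi3 Hj1 Hj2 Hj3 Hc A ops Hm x y z.
pose f (k : 'I_3) := nth 0 [:: i1; i2; i3] k.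
pose f' (k : 'I_3) := nth 0 [:: j1; j2; j3] k.
have key : forall (B : Type) (x y z : B) (a b c : nat), a < 3 -> b < 3 -> c < 3 ->
   forall k : 'I_3, nth (sel x y z a) [:: sel x y z a; sel x y z b; sel x y z c] k
     = sel x y z (nth 0 [:: a; b; c] k).
  by move=> B x0 y0 z0 a b c _ _ _ [[|[|[|k]]] Hk].
have Hax : axioms (genV o) (rename f s) (rename f' s').
  move=> v; rewrite !eval_rename.
  have E : forall j, j < 3 -> v j = sel (v 0) (v 1) (v 2) j by case=> [|[|[|j]]].
  have := Hc (v 0) (v 1) (v 2); rewrite /ev3 => Hc'.
  transitivity (eval o (fun k : 'I_3 => nth (sel (v 0) (v 1) (v 2) i1)
      [:: sel (v 0) (v 1) (v 2) i1; sel (v 0) (v 1) (v 2) i2; sel (v 0) (v 1) (v 2) i3] k) s).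
    apply: eval_ext => k; rewrite key // -E //.
    by rewrite /f; case: k => [[|[|[|k]]] Hk].
  rewrite Hc'; apply: eval_ext => k; rewrite key // -E //.
  by rewrite /f'; case: k => [[|[|[|k]]] Hk].
have := Hm _ _ Hax (fun j => sel x y z j); rewrite !eval_rename /ev3 => H.
transitivity (eval ops (fun k : 'I_3 => sel x y z (f k)) s).
  by apply: eval_ext => k; rewrite key.
rewrite H; apply: eval_ext => k; by rewrite key.
Qed.

Lemma lf_gen (F : Type) (ar : F -> nat) (A0 : finType) (o : forall f : F, ('I_(ar f) -> A0) -> A0) :
  locally_finite (genV o).
Proof.
move=> A ops Hm k g.
case: (Classical_Prop.classic (inhabited A)) => [[a0]|nA]; last first.
  have e : 'I_0 -> A by case=> i; rewrite ltn0.
  exists 0, e => t; exfalso; apply: nA; exact: inhabits (eval ops g t).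
pose T := {ffun {ffun 'I_k -> A0} -> A0}.
pose phi (t : term ar 'I_k) : T := [ffun w : {ffun 'I_k -> A0} => eval o (fun i => w i) t].
have key : forall t t', phi t = phi t' -> eval ops g t = eval ops g t'.
  move=> t t' E.
  have Hax : axioms (genV o) (rename val t) (rename val t').
    move=> v; rewrite !eval_rename.
    have := congr1 (fun Fv : T => Fv [ffun i : 'I_k => v (val i)]) E; rewrite /phi !ffunE => E'.
    transitivity (eval o (fun i => [ffun i => v (val i)] i) t).
      by apply: eval_ext => i; rewrite ffunE.
    rewrite E'; apply: eval_ext => i; by rewrite ffunE.
  pose v' (j : nat) := if insub j is Some i then g i else a0.
  have := Hm _ _ Hax v'; rewrite !eval_rename => H.
  have Ev : forall i : 'I_k, v' (val i) = g i by move=> i; rewrite /v' valK.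
  transitivity (eval ops (fun i => v' (val i)) t); first by apply: eval_ext => i; rewrite Ev.
  rewrite H; apply: eval_ext => i; by rewrite Ev.
pose P (Fv : T) (a : A) := exists t, phi t = Fv /\ eval ops g t = a.
exists #|T|, (fun i => epsilon (inhabits a0) (P (enum_val i))) => t.
exists (enum_rank (phi t)); rewrite enum_rankK.
have [t' [E1 E2]] := epsilon_spec (inhabits a0) (P (phi t)) (ex_intro _ (eval ops g t) (ex_intro _ t (conj erefl erefl))).
by rewrite -E2; apply: key.
Qed.

Definition opv (n h : nat) (up : bool) (x y z : nat) : nat :=
  if x <= z then maxn x (minn z (if up then (h + (x < y)) - 1 else h - (x < y)))
  else maxn z (minn x (if up then (n - h + (z < y)) - 1 else (n - h) - (z < y))).

Ltac opcase x y z := rewrite /opv; case: (leqP x z); case: (ltnP x y); case: (ltnP z y).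

Lemma opv_range n h b x y z : x < n -> z < n -> opv n h b x y z < n.
Proof. by opcase x y z => /= *; case: b; lia. Qed.

Lemma opv_xyx n h b x y : opv n h b x y x = x.
Proof. by opcase x y x => /= *; case: b; lia. Qed.

Lemma opv_h0 n b x y z : x < n -> z < n -> opv n 0 b x y z = x.
Proof. by opcase x y z => /= *; case: b; lia. Qed.

Lemma opv_hn n h b x y z : x < n -> z < n -> n <= h -> opv n h b x y z = z.
Proof. by opcase x y z => /= *; case: b; lia. Qed.

Lemma opv_dir n h x z : h < n -> opv n h true x z z = opv n h.+1 true x x z.
Proof. rewrite /opv ltnn; case: (leqP x z); case: (ltnP x z) => /= *; lia. Qed.

Lemma opv_xxz n h x z : h < n -> opv n h false x x z = opv n h.+1 true x x z.
Proof. rewrite /opv ltnn; case: (leqP x z); case: (ltnP z x) => /= *; lia. Qed.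

Lemma opv_xzz n h x z : h < n -> opv n h true x z z = opv n h.+1 false x z z.
Proof. rewrite /opv ltnn; case: (leqP x z); case: (ltnP x z) => /= *; lia. Qed.

Lemma opv_spec n h b x y z : h <= n -> opv n h b x y z = opv n (n - h) b z y x.
Proof.
move=> hn; rewrite /opv; have -> : n - (n - h) = h by lia.
case: (ltngtP x z) => H //=; subst; case: b => //=; case: ltnP; case: ltnP => /= *; lia.
Qed.

Lemma uanT n h u1 u2 u3 : u1 < n -> u3 < n -> opv n h true u1 u2 u3 = 0 ->
  (u1 = 0 /\ u3 = 0) \/ (h = 0 /\ u1 = 0) \/ (n <= h /\ u3 = 0) \/
  (h = 1 /\ u1 = 0 /\ u2 = 0) \/ (h.+1 = n /\ u2 = 0 /\ u3 = 0).
Proof. opcase u1 u2 u3 => /= *; lia. Qed.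

Lemma uanF n h u1 u2 u3 : u1 < n -> u3 < n -> opv n h false u1 u2 u3 = 0 ->
  (u1 = 0 /\ u3 = 0) \/ (h = 0 /\ u1 = 0) \/ (n <= h /\ u3 = 0) \/
  (h = 1 /\ u1 = 0) \/ (h.+1 = n /\ u3 = 0).
Proof. opcase u1 u2 u3 => /= *; lia. Qed.

Lemma lemA n h b p1 p2 p3 q1 q2 q3 :
  p1 < n -> p3 < n -> q1 < n -> q3 < n ->
  q1 <= p1 + 1 -> q3 <= p3 + 1 -> opv n h b q1 q2 q3 <= opv n h b p1 p2 p3 + 1.
Proof.
rewrite /opv => *.
case: b;
case: (leqP p1 p3); case: (ltnP p1 p2); case: (ltnP p3 p2);
case: (leqP q1 q3); case: (ltnP q1 q2); case: (ltnP q3 q2) => /= *; lia.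
Qed.

Lemma lemB n p1 p2 p3 q1 q2 q3 :
  p1 < n -> p3 < n -> q1 < n -> q3 < n ->
  q1 <= p1 + 1 -> q2 <= p2 + 1 -> opv n 1 true q1 q2 q3 <= opv n 1 true p1 p2 p3 + 1.
Proof.
rewrite /opv => *.
case: (leqP p1 p3); case: (ltnP p1 p2); case: (ltnP p3 p2);
case: (leqP q1 q3); case: (ltnP q1 q2); case: (ltnP q3 q2) => /= *; lia.
Qed.

Lemma lemC n h p1 p2 p3 q1 q2 q3 : h.+1 = n ->
  p1 < n -> p3 < n -> q1 < n -> q3 < n ->
  q2 <= p2 + 1 -> q3 <= p3 + 1 -> opv n h true q1 q2 q3 <= opv n h true p1 p2 p3 + 1.
Proof.
rewrite /opv => *.
case: (leqP p1 p3); case: (ltnP p1 p2); case: (ltnP p3 p2);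
case: (leqP q1 q3); case: (ltnP q1 q2); case: (ltnP q3 q2) => /= *; lia.
Qed.

Lemma lemD n p1 p2 p3 q1 q2 q3 :
  p1 < n -> p3 < n -> q1 < n -> q3 < n ->
  q1 <= p1 + 1 -> opv n 1 false q1 q2 q3 <= opv n 1 false p1 p2 p3 + 1.
Proof.
rewrite /opv => *.
case: (leqP p1 p3); case: (ltnP p1 p2); case: (ltnP p3 p2);
case: (leqP q1 q3); case: (ltnP q1 q2); case: (ltnP q3 q2) => /= *; lia.
Qed.

Lemma lemE n h p1 p2 p3 q1 q2 q3 : h.+1 = n ->
  p1 < n -> p3 < n -> q1 < n -> q3 < n ->
  q3 <= p3 + 1 -> opv n h false q1 q2 q3 <= opv n h false p1 p2 p3 + 1.
Proof.
rewrite /opv => *.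
case: (leqP p1 p3); case: (ltnP p1 p2); case: (ltnP p3 p2);
case: (leqP q1 q3); case: (ltnP q1 q2); case: (ltnP q3 q2) => /= *; lia.
Qed.


Lemma compat1 n h b u1 u2 u3 p1 p2 p3 q1 q2 q3 :
  u1 < n -> u3 < n -> p1 < n -> p3 < n -> q1 < n -> q3 < n ->
  (0 < u1 \/ q1 <= p1 + 1) -> (0 < u2 \/ q2 <= p2 + 1) -> (0 < u3 \/ q3 <= p3 + 1) ->
  opv n h b u1 u2 u3 = 0 -> opv n h b q1 q2 q3 <= opv n h b p1 p2 p3 + 1.
Proof.
move=> Hu1 Hu3 Hp1 Hp3 Hq1 Hq3 H1 H2 H3; case: b => U.
- case: (@uanT n h u1 u2 u3 Hu1 Hu3 U) => [[e1 e3]|[[eh e1]|[[eh e3]|[[eh [e1 e2]]|[eh [e2 e3]]]]]].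
  + apply: lemA => //; lia.
  + subst; rewrite !opv_h0 //; lia.
  + rewrite !opv_hn //; lia.
  + subst; apply: lemB => //; lia.
  + apply: lemC => //; lia.
- case: (@uanF n h u1 u2 u3 Hu1 Hu3 U) => [[e1 e3]|[[eh e1]|[[eh e3]|[[eh e1]|[eh e3]]]]].
  + apply: lemA => //; lia.
  + subst; rewrite !opv_h0 //; lia.
  + rewrite !opv_hn //; lia.
  + subst; apply: lemD => //; lia.
  + apply: lemE => //; lia.
Qed.

Lemma chainD (P Q : nat -> nat) m : P 0 = 0 -> Q 0 = 0 ->
  (forall h, h <= m -> Q h <= P h + 1) -> (forall h, h < m -> Q h = P h.+1) ->
  forall h, 0 < h -> h <= m -> P h + 1 <= h.
Proof.
move=> P0 Q0 HR HQ; elim=> [//|h IH] _ hm.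
rewrite -HQ //; case: h IH hm => [|h] IH hm; first by rewrite Q0.
have := HR h.+1 (ltnW hm); have := IH isT (ltnW hm); lia.
Qed.

Lemma chainJ (P Q : nat -> nat) m : P 0 = 0 -> Q 0 = 0 ->
  (forall h, h <= m -> Q h <= P h + 1 /\ P h <= Q h + 1) ->
  (forall h, h < m -> if odd h then Q h = Q h.+1 else P h = P h.+1) ->
  forall h, h <= m -> if odd h then P h + 1 <= h /\ Q h <= h else P h <= h /\ Q h <= h.
Proof.
move=> P0 Q0 HR HQ; elim=> [|h IH] hm; first by rewrite P0 Q0.
have := IH (ltnW hm); have := HQ h hm; have := HR h.+1 hm; rewrite /=.
case: (odd h) => /= E1 E2 E3; lia.
Qed.

Definition ar3 (_ : nat) := 3.
Definition i0 : 'I_3 := @Ordinal 3 0 isT.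
Definition i1 : 'I_3 := @Ordinal 3 1 isT.
Definition i2 : 'I_3 := @Ordinal 3 2 isT.
Definition Aop (n : nat) (up : nat -> bool) (h : nat) (a : 'I_(ar3 h) -> 'I_n) : 'I_n :=
  Ordinal (@opv_range n h (up h) (a i0) (a i1) (a i2) (ltn_ord _) (ltn_ord _)).
Arguments Aop : clear implicits.
Definition VV n up := genV (Aop n up).
Definition tt (h : nat) : term ar3 'I_3 := @App nat ar3 'I_3 h (fun i => Var ar3 i).

Lemma ev3_tt n up h (x y z : 'I_n) :
  val (@ev3 (VV n up) _ (Aop n up) (tt h) x y z) = opv n h (up h) x y z.
Proof. by []. Qed.


Ltac chk := move=> x0 y0 z0; apply: val_inj; rewrite /ev3 /sel /=.

Lemma base_ok n (up : nat -> bool) : 0 < n -> base_terms (V := VV n up) n tt.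
Proof.
move=> n0 A ops Hm x y z; split.
- refine (@transfer nat ar3 _ (Aop n up) (tt 0) (Var ar3 i0) 0 1 2 0 0 0 isT isT isT isT isT isT _ A ops Hm x y z).
  by chk; rewrite opv_h0.
- refine (@transfer nat ar3 _ (Aop n up) (tt n) (Var ar3 i0) 0 1 2 2 2 2 isT isT isT isT isT isT _ A ops Hm x y z).
  by chk; rewrite opv_hn.
- move=> h _.
  refine (@transfer nat ar3 _ (Aop n up) (tt h) (Var ar3 i0) 0 1 0 0 0 0 isT isT isT isT isT isT _ A ops Hm x y z).
  by chk; rewrite opv_xyx.
Qed.

Lemma spec_ok n (up : nat -> bool) : (forall h, h <= n -> up (n - h) = up h) ->
  specular (V := VV n up) n tt.
Proof.
move=> Hup A ops Hm x y z i hi.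
refine (@transfer nat ar3 _ (Aop n up) (tt i) (tt (n - i)) 0 1 2 2 1 0 isT isT isT isT isT isT _ A ops Hm x y z).
by chk; rewrite Hup // -opv_spec.
Qed.

Lemma posD n : 0 < n -> specular_n_directed_distributive (VV n (fun=> true)) n.
Proof.
move=> n0; exists tt; split; [split; first exact: base_ok|]; last by apply: spec_ok.
move=> A ops Hm x y z h hn.
refine (@transfer nat ar3 _ (Aop n (fun=> true)) (tt h) (tt h.+1) 0 2 2 0 0 2 isT isT isT isT isT isT _ A ops Hm x y z).
by chk; rewrite opv_dir.
Qed.

Lemma posJ n (up : nat -> bool) (al : bool) : 0 < n -> ~~ odd n ->
  (forall h, up h = odd h (+) al) ->
  exists t, jonsson_terms (V := VV n up) n al t /\ specular (V := VV n up) n t.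
Proof.
move=> n0 ev Hup; exists tt; split; [split; first exact: base_ok|]; last first.
  apply: spec_ok => h hn; rewrite !Hup oddB // (negbTE ev) //.
move=> A ops Hm x y z h hn.
case E: (odd h (+) al).
- refine (@transfer nat ar3 _ (Aop n up) (tt h) (tt h.+1) 0 2 2 0 2 2 isT isT isT isT isT isT _ A ops Hm x y z).
  by chk; rewrite !Hup /= E addNb E /= opv_xzz.
- refine (@transfer nat ar3 _ (Aop n up) (tt h) (tt h.+1) 0 0 2 0 0 2 isT isT isT isT isT isT _ A ops Hm x y z).
  by chk; rewrite !Hup /= E addNb E /= opv_xxz.
Qed.

Lemma pres n (up : nat -> bool) (Rel : nat -> nat -> nat -> Prop) :
  (forall h (a b c : 'I_3 -> 'I_n), (forall i, Rel (a i) (b i) (c i)) ->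
     Rel (opv n h (up h) (a i0) (a i1) (a i2)) (opv n h (up h) (b i0) (b i1) (b i2))
         (opv n h (up h) (c i0) (c i1) (c i2))) ->
  forall (t : term ar3 'I_3) (e1 e2 e3 : 'I_3 -> 'I_n), (forall i, Rel (e1 i) (e2 i) (e3 i)) ->
  Rel (eval (Aop n up) e1 t) (eval (Aop n up) e2 t) (eval (Aop n up) e3 t).
Proof.
move=> HR; elim=> [x|h ts IH] e1 e2 e3 He /=; first exact: He.
exact: (HR h _ _ _ (fun i => IH i _ _ _ He)).
Qed.

Lemma negD n : 1 < n -> ~ n_directed_distributive (VV n (fun=> true)) n.-1.
Proof.
move=> n2 [t [Hb Hd]].
have Hm : @models (VV n (fun=> true)) _ (Aop n (fun=> true)) := @models_gen _ _ _ _.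
have n0 : 0 < n by lia.
have nN : n.-1 < n by lia.
pose a0 : 'I_n := Ordinal n0. pose aN : 'I_n := Ordinal nN.
pose P h := val (@ev3 (VV n (fun=> true)) _ (Aop n (fun=> true)) (t h) a0 a0 aN).
pose Q h := val (@ev3 (VV n (fun=> true)) _ (Aop n (fun=> true)) (t h) a0 aN aN).
have [P0 Pm _] := Hb _ _ Hm a0 a0 aN.
have [Q0 _ _] := Hb _ _ Hm a0 aN aN.
have [_ _ HU] := Hb _ _ Hm a0 aN a0.
have HC : forall h (a b c : 'I_3 -> 'I_n), (forall i, 0 < a i \/ c i <= b i + 1) ->
     0 < opv n h true (a i0) (a i1) (a i2) \/
     opv n h true (c i0) (c i1) (c i2) <= opv n h true (b i0) (b i1) (b i2) + 1.
  move=> h' a b c H.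
  case: (posnP (opv n h' true (a i0) (a i1) (a i2))) => U; last by left.
  right; apply: (compat1 _ _ _ _ _ _ _ _ _ U) => //; by [apply: ltn_ord | apply: H].
have He : forall i : 'I_3, 0 < nth a0 [:: a0; aN; a0] i \/
    nth a0 [:: a0; aN; aN] i <= nth a0 [:: a0; a0; aN] i + 1.
  case=> [[|[|[|i]]] Hi] //=; [right|left|right] => //=; lia.
have HR : forall h, h <= n.-1 -> Q h <= P h + 1.
  move=> h hh.
  have := @pres n (fun=> true) (fun u p q => 0 < u \/ q <= p + 1) HC (t h) _ _ _ He.
  rewrite -/(ev3 _ (t h) a0 aN a0) HU //= -/(ev3 _ (t h) a0 a0 aN) -/(ev3 _ (t h) a0 aN aN).
  by case.
have HQ : forall h, h < n.-1 -> Q h = P h.+1.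
  by move=> h hh; rewrite /P /Q (Hd _ _ Hm a0 a0 aN h hh).
have P0' : P 0 = 0 by rewrite /P P0.
have Q0' : Q 0 = 0 by rewrite /Q Q0.
have n1 : 0 < n.-1 by lia.
have := @chainD P Q n.-1 P0' Q0' HR HQ n.-1 n1 (leqnn _).
rewrite /P Pm /=; lia.
Qed.

Lemma negJ n (up : nat -> bool) : 1 < n -> ~~ odd n -> ~ n_distributive (VV n up) n.-1.
Proof.
move=> n2 ev [t [Hb Hd]].
have Hm : @models (VV n up) _ (Aop n up) := @models_gen _ _ _ _.
have n0 : 0 < n by lia.
have nN : n.-1 < n by lia.
pose a0 : 'I_n := Ordinal n0. pose aN : 'I_n := Ordinal nN.
pose P h := val (@ev3 (VV n up) _ (Aop n up) (t h) a0 a0 aN).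
pose Q h := val (@ev3 (VV n up) _ (Aop n up) (t h) a0 aN aN).
have [P0 Pm _] := Hb _ _ Hm a0 a0 aN.
have [Q0 _ _] := Hb _ _ Hm a0 aN aN.
have [_ _ HU] := Hb _ _ Hm a0 aN a0.
pose RJ (u p q : nat) := 0 < u \/ (q <= p + 1 /\ p <= q + 1).
have HC : forall h (a b c : 'I_3 -> 'I_n), (forall i, RJ (a i) (b i) (c i)) ->
     RJ (opv n h (up h) (a i0) (a i1) (a i2)) (opv n h (up h) (b i0) (b i1) (b i2))
        (opv n h (up h) (c i0) (c i1) (c i2)).
  move=> h' a b c H.
  case: (posnP (opv n h' (up h') (a i0) (a i1) (a i2))) => U; last by left.
  right; split.
  - apply: (compat1 _ _ _ _ _ _ _ _ _ U) => //;
      by [apply: ltn_ord | case: (H i0) => [|[]]; auto | case: (H i1) => [|[]]; auto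
         | case: (H i2) => [|[]]; auto].
  - apply: (compat1 _ _ _ _ _ _ _ _ _ U) => //;
      by [apply: ltn_ord | case: (H i0) => [|[]]; auto | case: (H i1) => [|[]]; auto
         | case: (H i2) => [|[]]; auto].
have He : forall i : 'I_3, RJ (nth a0 [:: a0; aN; a0] i) (nth a0 [:: a0; a0; aN] i)
    (nth a0 [:: a0; aN; aN] i).
  case=> [[|[|[|i]]] Hi] //=; rewrite /RJ /=; [right|left|right] => //=; lia.
have HR : forall h, h <= n.-1 -> Q h <= P h + 1 /\ P h <= Q h + 1.
  move=> h hh.
  have := @pres n up RJ HC (t h) _ _ _ He.
  rewrite /RJ -/(ev3 _ (t h) a0 aN a0) HU //= -/(ev3 _ (t h) a0 a0 aN) -/(ev3 _ (t h) a0 aN aN).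
  by case.
have HQ : forall h, h < n.-1 -> if odd h then Q h = Q h.+1 else P h = P h.+1.
  move=> h hh; have := Hd _ _ Hm a0 a0 aN h hh; have := Hd _ _ Hm a0 aN aN h hh.
  rewrite addbF /P /Q; case: (odd h) => [E _|_ E]; by rewrite E.
have P0' : P 0 = 0 by rewrite /P P0.
have Q0' : Q 0 = 0 by rewrite /Q Q0.
have := @chainJ P Q n.-1 P0' Q0' HR HQ n.-1 (leqnn _).
have -> : odd n.-1.
  have := oddS n.-1; rewrite prednK // => E; by move: ev; rewrite E negbK.
rewrite /P Pm /=; lia.
Qed.

Theorem corollary6p3 :
  (forall n : nat, 2 <= n -> ~~ odd n ->
     (exists V : variety, locally_finite V /\ specular_n_distributive V n
                          /\ ~ n_distributive V n.-1) /\
     (exists V : variety, locally_finite V /\ specular_n_alvin V n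
                          /\ ~ n_distributive V n.-1)) /\
  (forall n : nat, 2 <= n ->
     exists V : variety, locally_finite V /\ specular_n_directed_distributive V n
                         /\ ~ n_directed_distributive V n.-1).
Proof.
split.
- move=> n n2 ev; have n0 : 0 < n by lia.
  split.
  + exists (VV n odd); split; first exact: (@lf_gen _ _ _ (Aop n odd)).
    split; last exact: (@negJ n odd n2 ev).
    by apply: posJ => // h; rewrite addbF.
  + exists (VV n (fun h => ~~ odd h)); split; first exact: (@lf_gen _ _ _ (Aop n (fun h => ~~ odd h))).
    split; last exact: (@negJ n (fun h => ~~ odd h) n2 ev).
    by apply: posJ => // h; rewrite addbT.
- move=> n n2; have n0 : 0 < n by lia.
  exists (VV n (fun=> true)); split; first exact: (@lf_gen _ _ _ (Aop n (fun=> true))).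
  split; [exact: (@posD n n0) | exact: (@negD n n2)].
Qed.
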